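(* Let $A$ be a pre-Lie commutative algebra, with operations $\circ$ and $\cdot$. Then $A$, equipped with the product $\circ$ and the bracket $[a_1,a_2]=a_1\cdot a_2-a_2\cdot a_1$, is an $F$-manifold algebra: $\circ$ is commutative and associative, $[-,-]$ is skew-symmetric and satisfies the Jacobi identity, and the Hertling--Manin relation $P_{a_1\circ a_2}(a_3,a_4)=a_1\circ P_{a_2}(a_3,a_4)+a_2\circ P_{a_1}(a_3,a_4)$ holds for all $a_1,a_2,a_3,a_4\in A$, where $P_{a_1}(a_2,a_3)=[a_1,a_2\circ a_3]-[a_1,a_2]\circ a_3-a_2\circ[a_1,a_3]$.
   Context: Work over a field of characteristic zero (with the Koszul sign rule if the algebra is graded; the identities are written here for even elements). A pre-Lie commutative algebra is a vector space $A$ with a commutative binary operation $\circ$ and a binary operation $\cdot$ (no symmetry) satisfying $(a_1\circ a_2)\circ a_3=a_1\circ(a_2\circ a_3)$, $(a_1\cdot a_2)\cdot a_3 - a_1\cdot (a_2\cdot a_3) = (a_1\cdot a_3)\cdot a_2- a_1\cdot (a_3\cdot a_2)$, $(a_1\circ a_2)\cdot a_3=(a_1\cdot a_3)\circ a_2 + a_1\circ (a_2\cdot a_3)$, for all $a_1,a_2,a_3\in A$. *)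

(* Defs.v *)
From mathcomp Require Import all_boot all_algebra.
Set Implicit Arguments. Unset Strict Implicit. Unset Printing Implicit Defensive.
Import GRing.Theory.
Local Open Scope ring_scope.

Definition bilinear_op (K : fieldType) (A : lmodType K) (op : A -> A -> A) : Prop :=
  (forall (k : K) (x y z : A), op (k *: x + y) z = k *: op x z + op y z) /\
  (forall (k : K) (x y z : A), op x (k *: y + z) = k *: op x y + op x z).

Definition pre_Lie_commutative (K : fieldType) (A : lmodType K)
  (circ dot : A -> A -> A) : Prop :=
  [/\ bilinear_op circ /\ bilinear_op dot,
      (forall a1 a2 : A, circ a1 a2 = circ a2 a1),
      (forall a1 a2 a3 : A, circ (circ a1 a2) a3 = circ a1 (circ a2 a3)),
      (forall a1 a2 a3 : A,
          dot (dot a1 a2) a3 - dot a1 (dot a2 a3)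
        = dot (dot a1 a3) a2 - dot a1 (dot a3 a2)) &
      (forall a1 a2 a3 : A,
          dot (circ a1 a2) a3 = circ (dot a1 a3) a2 + circ a1 (dot a2 a3))].

Definition commbr (K : fieldType) (A : lmodType K) (dot : A -> A -> A) (a1 a2 : A) : A :=
  dot a1 a2 - dot a2 a1.

Definition HM_P (K : fieldType) (A : lmodType K) (circ br : A -> A -> A) (a1 a2 a3 : A) : A :=
  br a1 (circ a2 a3) - circ (br a1 a2) a3 - circ a2 (br a1 a3).

Definition F_manifold_algebra (K : fieldType) (A : lmodType K) (circ br : A -> A -> A) : Prop :=
  [/\ (forall a1 a2 : A, circ a1 a2 = circ a2 a1),
      (forall a1 a2 a3 : A, circ (circ a1 a2) a3 = circ a1 (circ a2 a3)),
      (forall a1 a2 : A, br a1 a2 = - br a2 a1),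
      (forall a1 a2 a3 : A, br a1 (br a2 a3) + br a2 (br a3 a1) + br a3 (br a1 a2) = 0) &
      (forall a1 a2 a3 a4 : A,
          HM_P circ br (circ a1 a2) a3 a4
        = circ a1 (HM_P circ br a2 a3 a4) + circ a2 (HM_P circ br a1 a3 a4))].

(* Main.v *)
Require Import Defs.
From mathcomp Require Import all_boot all_algebra.
Local Open Scope ring_scope.
Import GRing.Theory.

Ltac extract tgt S :=
  lazymatch S with
  | tgt + ?R => constr:(@erefl _ S)
  | ?a + ?R => let p := extract tgt R in
       constr:(eq_trans (f_equal (fun z => a + z) p) (addrCA a tgt _))
  end.

Ltac extractN tgt S :=
  lazymatch S with
  | (- tgt) + ?R => constr:(@erefl _ S)
  | ?a + ?R => let p := extractN tgt R in
       constr:(eq_trans (f_equal (fun z => a + z) p) (addrCA a _ _))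
  end.

Ltac zcancel :=
  lazymatch goal with
  | |- 0 = 0 => reflexivity
  | |- (- ?t) + ?R = 0 => let p := extract t R in (try rewrite p); rewrite addKr; zcancel
  | |- ?t + ?R = 0 => let p := extractN t R in (try rewrite p); rewrite addNKr; zcancel
  end.

Lemma zlem (V : zmodType) (x : V) : x + 0 = 0 -> x = 0.
Proof. by rewrite addr0. Qed.

Ltac zsolve :=
  apply/eqP; rewrite -subr_eq0; apply/eqP;
  rewrite ?opprD ?opprK ?oppr0 ?addr0 ?add0r; apply: zlem; rewrite -?addrA; zcancel.

Section Lin.
Variables (K : fieldType) (A : lmodType K) (op : A -> A -> A).
Hypothesis hop : bilinear_op op.

Lemma op0l z : op 0 z = 0.
Proof.
have := (proj1 hop) 1 0 0 z; rewrite !scale1r addr0 => h.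
by apply: (addrI (op 0 z)); rewrite addr0 -h.
Qed.
Lemma op0r z : op z 0 = 0.
Proof.
have := (proj2 hop) 1 z 0 0; rewrite !scale1r addr0 => h.
by apply: (addrI (op z 0)); rewrite addr0 -h.
Qed.
Lemma opDl x y z : op (x + y) z = op x z + op y z.
Proof. by have := (proj1 hop) 1 x y z; rewrite !scale1r. Qed.
Lemma opDr x y z : op z (x + y) = op z x + op z y.
Proof. by have := (proj2 hop) 1 z x y; rewrite !scale1r. Qed.
Lemma opNl x z : op (- x) z = - op x z.
Proof. by have := (proj1 hop) (-1) x 0 z; rewrite !scaleN1r addr0 op0l addr0. Qed.
Lemma opNr x z : op z (- x) = - op z x.
Proof. by have := (proj2 hop) (-1) z x 0; rewrite !scaleN1r addr0 op0r addr0. Qed.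
End Lin.
Arguments op0l {K A op} hop z.
Arguments op0r {K A op} hop z.
Arguments opDl {K A op} hop x y z.
Arguments opDr {K A op} hop x y z.
Arguments opNl {K A op} hop x z.
Arguments opNr {K A op} hop x z.

Ltac expand hc hd := repeat progress rewrite ?(opDl hc) ?(opDr hc) ?(opNl hc) ?(opNr hc) ?(opDl hd) ?(opDr hd) ?(opNl hd) ?(opNr hd).

Theorem proposition12 (K : fieldType) (hK : [pchar K] =i pred0) (A : lmodType K)
  (circ dot : A -> A -> A) :
  pre_Lie_commutative circ dot ->
  F_manifold_algebra circ (commbr dot).
Proof.
case=> [[hc hd] Hcomm Hass Hpl Hc].
have H4 : forall x y z, dot (dot x y) z = dot x (dot y z) + dot (dot x z) y - dot x (dot z y).
  move=> x y z; rewrite -[dot (dot x y) z](subrK (dot x (dot y z))) Hpl.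
  zsolve.
have CA : forall x y z, circ x (circ y z) = circ y (circ x z).
  by move=> x y z; rewrite -Hass (Hcomm x y) Hass.
have HP : forall a b c, HM_P circ (commbr dot) a b c
    = dot a (circ b c) - circ (dot a b) c - circ b (dot a c).
  move=> a b c; rewrite /HM_P /commbr Hc.
  expand hc hd.
  zsolve.
split => //.
- by move=> a1 a2; rewrite /commbr opprB.
- move=> a b c; rewrite /commbr.
  expand hc hd.
  rewrite (H4 b c a) (H4 c a b) (H4 a b c).
  expand hc hd.
  zsolve.
- move=> a1 a2 b c; rewrite !HP !Hc.
  expand hc hd.
  rewrite (Hcomm (dot a1 (circ b c)) a2) !Hass (CA a2 (dot a1 b) c)
     (Hcomm (dot a1 c) a2) (CA b a2) (CA b a1).
  zsolve.
Qed.
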